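(* Let $A$ be a finite-vertex graph and $w$ a right-infinite path over $A$. The following are equivalent: (1) $w$ is recurrent; (2) $P_{\mathsf{Sd}}(w)$ contains an idempotent; (3) $P_{\mathsf V}(w)$ contains an idempotent for every pseudovariety of semigroupoids $\mathsf V$ containing $\mathsf N$; (4) $P_{g\mathsf{LSl}}(w)$ contains an idempotent.
   Context: Semigroupoids are graphs with associative partial multiplication $st$ defined iff the source of $s$ equals the range of $t$. Pseudovarieties of semigroupoids: classes of finite semigroupoids closed under divisors, finite direct products, finite coproducts; $\mathsf{Sd}$ is the pseudovariety of all finite semigroupoids, $\mathsf N$ that of finite nilpotent semigroups, $\mathsf{LSl}$ the pseudovariety of finite semigroups $S$ such that $eSe$ is a semilattice for every idempotent $e$, and $g\mathsf{LSl}$ the smallest pseudovariety of semigroupoids containing $\mathsf{LSl}$. $\overline{\Omega}_A\mathsf V$ is the free pro-$\mathsf V$ semigroupoid over the finite-vertex graph $A$, containing the paths over $A$ when $\mathsf V\supseteq\mathsf N$. A right-infinite path is a sequence $w=w_0w_1\cdots$ of edges with each $w[0,n)=w_0\cdots w_{n-1}$ a path; $w[m,m+n)=w_m\cdots w_{m+n-1}$, $w[0,n]=w_0\cdots w_n$. $P_{\mathsf V}(w)$ is the set of cluster points in $\overline{\Omega}_A\mathsf V$ of $(w[0,n])_{n\in\mathbb N}$. $w$ is recurrent if for every $n$ there is $m>n$ with $w[0,n)=w[m,m+n)$. *)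

(* Defs.v *)
From mathcomp Require Import all_boot.
Set Implicit Arguments. Unset Strict Implicit. Unset Printing Implicit Defensive.

Record graph := Graph {
  gV : finType; gE : Type; gsrc : gE -> gV; grng : gE -> gV }.

(** Multiplication [smul s t] is meaningful only when [ssrc s = srng t]
   (the paper's convention: st defined iff source of s = range of t);
   on other pairs it is an irrelevant junk value. *)
Record sgd := Sgd {
  sV : finType; sE : finType;
  ssrc : sE -> sV; srng : sE -> sV;
  smul : sE -> sE -> sE;
  smul_src : forall s t, ssrc s = srng t -> ssrc (smul s t) = ssrc t;
  smul_rng : forall s t, ssrc s = srng t -> srng (smul s t) = srng s;
  smulA : forall s t u, ssrc s = srng t -> ssrc t = srng u ->
            smul (smul s t) u = smul s (smul t u) }.
Arguments ssrc {_} _. Arguments srng {_} _. Arguments smul {_} _ _.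

Record shom (S T : sgd) := SHom {
  hv : sV S -> sV T; he : sE S -> sE T;
  hsrc : forall e, ssrc (he e) = hv (ssrc e);
  hrng : forall e, srng (he e) = hv (srng e);
  hmul : forall s t, ssrc s = srng t -> he (smul s t) = smul (he s) (he t) }.

(** Division (Tilson / Almeida--Weil): S divides T iff there are a
   semigroupoid R, a faithful morphism R -> T and a quotient morphism
   R -> S (bijective on vertices, onto on edges). *)
Definition divides (S T : sgd) : Prop :=
  exists R : sgd, exists f : shom R T, exists g : shom R S,
    (forall r r' : sE R, ssrc r = ssrc r' -> srng r = srng r' ->
        he f r = he f r' -> r = r') /\
    bijective (hv g) /\ (forall e : sE S, exists r, he g r = e).

Definition prod_sgd (S T : sgd) : sgd.
Proof.
refine (@Sgd (sV S * sV T)%type (sE S * sE T)%type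
  (fun e => (ssrc e.1, ssrc e.2)) (fun e => (srng e.1, srng e.2))
  (fun s t => (smul s.1 t.1, smul s.2 t.2)) _ _ _).
- by move=> [a b] [c d] /= [h1 h2]; rewrite !smul_src.
- by move=> [a b] [c d] /= [h1 h2]; rewrite !smul_rng.
- by move=> [a b] [c d] [e f] /= [h1 h2] [h3 h4]; rewrite !smulA.
Defined.

Definition coprod_mul (S T : sgd) (s t : sE S + sE T) : sE S + sE T :=
  match s, t with
  | inl a, inl b => inl (smul a b)
  | inr a, inr b => inr (smul a b)
  | _, _ => s
  end.

Definition coprod_src (S T : sgd) (e : sE S + sE T) : (sV S + sV T)%type :=
  match e with inl a => inl (ssrc a) | inr a => inr (ssrc a) end.
Definition coprod_rng (S T : sgd) (e : sE S + sE T) : (sV S + sV T)%type :=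
  match e with inl a => inl (srng a) | inr a => inr (srng a) end.

Definition coprod_sgd (S T : sgd) : sgd.
Proof.
refine (@Sgd (sV S + sV T)%type (sE S + sE T)%type
  (@coprod_src S T) (@coprod_rng S T) (@coprod_mul S T) _ _ _).
- by move=> [a|a] [b|b] //= [h]; rewrite smul_src.
- by move=> [a|a] [b|b] //= [h]; rewrite smul_rng.
- by move=> [a|a] [b|b] [c|c] //= [h1] [h2]; rewrite smulA.
Defined.

(** Empty semigroupoid (empty coproduct) and trivial one (empty product). *)
Definition empty_sgd : sgd.
Proof.
refine (@Sgd void void (fun e => e) (fun e => e) (fun s _ => s) _ _ _);
  by case.
Defined.

Definition unit_sgd : sgd.
Proof.
refine (@Sgd unit unit (fun _ => tt) (fun _ => tt) (fun _ _ => tt) _ _ _);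
  by [].
Defined.

Definition pseudovariety (V : sgd -> Prop) : Prop :=
  [/\ forall S T, divides S T -> V T -> V S,
      V unit_sgd, (forall S T, V S -> V T -> V (prod_sgd S T)),
      V empty_sgd & (forall S T, V S -> V T -> V (coprod_sgd S T))].

Definition Sd : sgd -> Prop := fun _ => True.

(** Product of a nonempty finite sequence f 0 f 1 ... f n (n+1 factors). *)
Fixpoint prodp (S : sgd) (f : nat -> sE S) (n : nat) : sE S :=
  match n with
  | 0 => f 0
  | n'.+1 => smul (prodp f n') (f n'.+1)
  end.

(** Finite semigroups = one-vertex semigroupoids. *)
Definition is_semigroup (S : sgd) : Prop := #|sV S| = 1.

Definition nilpotent (S : sgd) : Prop :=
  is_semigroup S /\
  exists z : sE S, exists n : nat, forall f : nat -> sE S, prodp f n = z.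

Definition contains_N (V : sgd -> Prop) : Prop :=
  forall S, nilpotent S -> V S.

Definition LSl (S : sgd) : Prop :=
  is_semigroup S /\
  forall e s t : sE S, smul e e = e ->
    let a := smul (smul e s) e in let b := smul (smul e t) e in
    smul a a = a /\ smul a b = smul b a.

Definition gLSl (S : sgd) : Prop :=
  forall V, pseudovariety V -> (forall T, LSl T -> V T) -> V S.

Record ghom (A : graph) (S : sgd) := GHom {
  gv : gV A -> sV S; ge : gE A -> sE S;
  ge_src : forall a, ssrc (ge a) = gv (gsrc a);
  ge_rng : forall a, srng (ge a) = gv (grng a) }.

Definition rinf_path (A : graph) (w : nat -> gE A) : Prop :=
  forall i, gsrc (w i) = grng (w i.+1).

Definition recurrent (A : graph) (w : nat -> gE A) : Prop :=
  forall n, exists m, n < m /\ forall i, i < n -> w i = w (m + i).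

(** Elements of the free pro-V semigroupoid over A, described (Reiterman /
   Almeida) as implicit operations: compatible families indexed by graph
   morphisms phi : A -> S with S in V, with value an edge of S, natural with
   respect to semigroupoid morphisms between members of V. *)
Definition free_elt (V : sgd -> Prop) (A : graph) (x y : gV A)
  (pi : forall S : sgd, V S -> ghom A S -> sE S) : Prop :=
  (forall S (hS : V S) (phi : ghom A S),
      ssrc (pi S hS phi) = gv phi x /\ srng (pi S hS phi) = gv phi y) /\
  (forall S T (hS : V S) (hT : V T) (psi : shom S T)
          (phi : ghom A S) (phi' : ghom A T),
      (forall v, gv phi' v = hv psi (gv phi v)) ->
      (forall a, ge phi' a = he psi (ge phi a)) ->
      pi T hT phi' = he psi (pi S hS phi)).

Definition eval_prefix (A : graph) (S : sgd) (phi : ghom A S)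
  (w : nat -> gE A) (n : nat) : sE S :=
  prodp (fun i => ge phi (w i)) n.

(** pi (with vertices x,y) is a cluster point of (w[0,n])_n in the free
   pro-V semigroupoid: every basic open neighbourhood (finitely many
   coordinates) contains w[0,n] for infinitely many n. *)
Definition cluster_pt (V : sgd -> Prop) (A : graph) (w : nat -> gE A)
  (x y : gV A) (pi : forall S : sgd, V S -> ghom A S -> sE S) : Prop :=
  forall (k : nat) (Ss : 'I_k -> sgd) (hs : forall i, V (Ss i))
         (phis : forall i, ghom A (Ss i)) (N : nat),
  exists n, N <= n /\ gsrc (w n) = x /\ grng (w 0) = y /\
    forall i, pi (Ss i) (hs i) (phis i) = eval_prefix (phis i) w n.

Definition P_has_idempotent (V : sgd -> Prop) (A : graph) (w : nat -> gE A)
  : Prop :=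
  exists x : gV A, exists pi : (forall S : sgd, V S -> ghom A S -> sE S),
    @free_elt V A x x pi /\
    (forall S (hS : V S) (phi : ghom A S),
        smul (pi S hS phi) (pi S hS phi) = pi S hS phi) /\
    @cluster_pt V A w x x pi.

(* Main.v *)
From Stdlib Require Import Lia ClassicalEpsilon Classical.
Require Import Defs.
From mathcomp Require Import all_boot.
From mathcomp Require Import zify.
From mathcomp Require Import boolp classical_sets filter.
Set Implicit Arguments. Unset Strict Implicit. Unset Printing Implicit Defensive.

Definition infP (X : nat -> Prop) := forall N, exists n, N <= n /\ X n.

Lemma pigeon (C : finType) (X : nat -> Prop) (col : nat -> C) :
  infP X -> exists c, infP (fun n => X n /\ col n = c).
Proof.
move=> HX; apply: NNPP => Hn.
have key : forall s : seq C, exists N, forall n, N <= n -> X n -> col n \notin s.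
  elim=> [|c s [N HN]]; first by exists 0.
  have [M HM] : exists M, forall n, M <= n -> ~ (X n /\ col n = c).
    apply: NNPP => H1; apply: Hn; exists c => M.
    apply: NNPP => H2; apply: H1; exists M => n Mn [Xn cn]; apply: H2.
    by exists n.
  exists (maxn N M) => n; rewrite geq_max => /andP[Nn Mn] Xn.
  rewrite in_cons negb_or HN // andbT; apply/eqP => e; exact: HM n Mn (conj Xn e).
have [N HN] := key (enum C).
have [n [Nn Xn]] := HX N.
by move: (HN n Nn Xn); rewrite mem_enum.
Qed.

Lemma triangle (C : finType) (d : nat -> nat -> C) :
  exists a b c, a < b /\ b < c /\ d a b = d a c /\ d a b = d b c.
Proof.
suff H : forall k (s : seq C) (X : nat -> Prop), size s <= k -> infP X ->
   (forall a b, X a -> X b -> a < b -> d a b \in s) ->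
   exists a b c, a < b /\ b < c /\ d a b = d a c /\ d a b = d b c.
  apply: (H _ (enum C) (fun _ => True) (leqnn _)) => [N|a b _ _ _].
    by exists N.
  by rewrite mem_enum.
elim=> [|k IH] s X Hs HX Hd.
  have [a [_ Xa]] := HX 0; have [b [ab Xb]] := HX a.+1.
  by move: (Hd a b Xa Xb ab); case: s {Hd} Hs.
have [a [_ Xa]] := HX 0.
have HY0 : infP (fun y => X y /\ a < y).
  move=> N; have [n [Nn Xn]] := HX (maxn N a.+1).
  by exists n; move: Nn; rewrite geq_max => /andP[-> ->].
have [c Hc] := pigeon (d a) HY0.
case: (Classical_Prop.classic (exists b b', ((X b /\ a < b) /\ d a b = c) /\ ((X b' /\ a < b') /\ d a b' = c)
          /\ b < b' /\ d b b' = c)).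
  move=> [b [b' [[[_ ab] e1] [[[_ _] e2] [bb' e3]]]]].
  by exists a, b, b'; rewrite e1 e2 e3.
move=> Hno.
have [y0 [_ [[Xy0 ay0] ey0]]] := Hc 0.
have cs : c \in s by rewrite -ey0; apply: Hd.
apply: (IH (seq.filter (predC1 c) s) (fun n => (X n /\ a < n) /\ d a n = c)) => //.
  rewrite size_filter.
  have := count_predC (pred1 c) s.
  have -> : count (predC1 c) s = count (predC (pred1 c)) s by apply: eq_count.
  have : 0 < count (pred1 c) s by rewrite -has_count has_pred1.
  move: Hs => /=. lia.
move=> b b' Yb Yb' bb'; rewrite mem_filter /=; apply/andP; split.
  apply/eqP => e; apply: Hno; exists b, b'; by [].
by apply: Hd => //; [case: Yb => [[]] | case: Yb' => [[]]].
Qed.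

Lemma prodp_sr (S : sgd) (f : nat -> sE S) n :
  (forall i, ssrc (f i) = srng (f i.+1)) ->
  ssrc (prodp f n) = ssrc (f n) /\ srng (prodp f n) = srng (f 0).
Proof.
move=> Hf; elim: n => [|n [IH1 IH2]] //=.
have c : ssrc (prodp f n) = srng (f n.+1) by rewrite IH1 Hf.
by rewrite smul_src // smul_rng.
Qed.

Lemma prodp_seg (S : sgd) (f : nat -> sE S) a b :
  (forall i, ssrc (f i) = srng (f i.+1)) ->
  (forall t, t <= b -> f (a.+1 + t) = f t) ->
  prodp f (a.+1 + b) = smul (prodp f a) (prodp f b).
Proof.
move=> Hf; elim: b => [|b IH] Hb.
  by rewrite addn0 /= -(Hb 0 (leqnn 0)) addn0.
rewrite addnS. change (prodp f (a.+1 + b).+1) with (smul (prodp f (a.+1 + b)) (f (a.+1 + b).+1)).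
rewrite IH; last by move=> t tb; apply: Hb; lia.
rewrite -addnS (Hb b.+1 (leqnn _)) /=.
have [s1 _] := prodp_sr a Hf.
have [s2 r2] := prodp_sr b Hf.
rewrite smulA // ?s1 ?r2 ?s2 ?Hf //.
have := Hb 0 (leq0n _); rewrite addn0 => <-.
by [].
Qed.

Lemma eval_chain (A : graph) (S : sgd) (phi : ghom A S) (w : nat -> gE A) :
  rinf_path w -> forall i, ssrc (ge phi (w i)) = srng (ge phi (w i.+1)).
Proof. by move=> Hw i; rewrite ge_src ge_rng Hw. Qed.

Lemma lemK (A : graph) (w : nat -> gE A) (S : sgd) (phi : ghom A S) N :
  rinf_path w -> recurrent w ->
  exists n, N <= n /\ gsrc (w n) = grng (w 0) /\
    smul (eval_prefix phi w n) (eval_prefix phi w n) = eval_prefix phi w n.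
Proof.
move=> Hw Hr.
pose g L := proj1_sig (ClassicalEpsilon.constructive_indefinite_description _ (Hr L)).
have Hg : forall L, L < g L /\ forall i, i < L -> w i = w (g L + i).
  by move=> L; rewrite /g; case: ClassicalEpsilon.constructive_indefinite_description.
pose L := fix L k := if k is k'.+1 then L k' + g (L k') else N.+1.
have LS : forall k, L k.+1 = L k + g (L k) by [].
have Lpos : forall k, N < L k.
  elim=> [|k IH] //; rewrite LS; lia.
have Lgt : forall k, L k < g (L k) by move=> k; case: (Hg (L k)).
have Lmono : forall a b, a <= b -> L a <= L b.
  move=> a b ab; elim: b ab => [|b IH]; first by rewrite leqn0 => /eqP ->.
  rewrite leq_eqVlt => /orP[/eqP -> //|]; rewrite ltnS => /IH; rewrite LS; lia.
have blk : forall a b, a <= b -> forall t, t < L a -> w (L b - L a + t) = w t.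
  move=> a b ab; elim: b ab => [|b IH]; first by rewrite leqn0 => /eqP -> t; rewrite subnn.
  rewrite leq_eqVlt => /orP[/eqP -> t|]; first by rewrite subnn.
  rewrite ltnS => ab t ta.
  have := Lmono _ _ ab.
  have [_ Hg'] := Hg (L b).
  move=> Lab.
  have -> : L b.+1 - L a + t = g (L b) + (L b - L a + t) by rewrite LS; lia.
  rewrite -Hg'; last by lia.
  exact: IH.
pose f := fun i => ge phi (w i).
have Hf := eval_chain phi Hw.
pose d a b := eval_prefix phi w (L b - L a).-1.
have dmul : forall a b c, a < b -> b < c -> d a c = smul (d b c) (d a b).
  move=> a b c ab bc; rewrite /d /eval_prefix.
  have Lab := Lmono _ _ ab; have Lbc := Lmono _ _ bc.
  have ga := Lgt a; have gb := Lgt b.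
  rewrite LS in Lab; rewrite LS in Lbc.
  have -> : (L c - L a).-1 = ((L c - L b).-1).+1 + (L b - L a).-1 by lia.
  apply: prodp_seg => // t tb.
  have -> : ((L c - L b).-1).+1 + t = L c - L b + t by lia.
  by rewrite /f blk //; [lia | lia].
have [a [b [c [ab [bc [e1 e2]]]]]] := triangle d.
exists (L b - L a).-1.
have Lab := Lmono _ _ ab; have ga := Lgt a; rewrite LS in Lab.
have Na := Lpos a.
split; first by lia.
split.
  rewrite Hw.
  have -> : (L b - L a).-1.+1 = L b - L a + 0 by lia.
  by rewrite blk //; lia.
rewrite -/(d a b).
have := dmul a b c ab bc; rewrite -e1 -e2 => H.
by rewrite -H.
Qed.

Definition occ (S : eqType) (d0 : S) (uc x : seq S) i :=
  i + size uc <= size x /\ forall j, j < size uc -> nth d0 x (i+j) = nth d0 uc j.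
Definition flagP (S : eqType) (d0 : S) (uc x : seq S) := exists i, 0 < i /\ occ d0 uc x i.
Definition lastn (S : Type) K (x : seq S) := rev (take K (rev x)).

Lemma occ_drop (S : eqType) (d0 : S) uc z m j : m <= size z ->
  occ d0 uc (drop m z) j <-> occ d0 uc z (m + j).
Proof.
move=> mz; rewrite /occ size_drop; split=> [[h1 h2]|[h1 h2]]; split; try lia.
  by move=> k kl; rewrite -addnA -nth_drop h2.
by move=> k kl; rewrite nth_drop addnA h2.
Qed.

Lemma occ_take (S : eqType) (d0 : S) uc z m i :
  occ d0 uc (take m z) i <-> occ d0 uc z i /\ i + size uc <= m.
Proof.
rewrite /occ size_take_min; split=> [[h1 h2]|[[h1 h2] h3]].
  split; [split; first by lia|by lia].
  by move=> k kl; rewrite -h2 // nth_take //; lia.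
split; first by lia.
by move=> k kl; rewrite nth_take ?h2 //; lia.
Qed.

Lemma occ_catl (S : eqType) (d0 : S) uc x y i : i + size uc <= size x ->
  occ d0 uc (x ++ y) i <-> occ d0 uc x i.
Proof.
move=> ix; rewrite /occ size_cat; split=> [[h1 h2]|[h1 h2]]; split; try lia.
  by move=> k kl; rewrite -h2 // nth_cat ifT //; lia.
by move=> k kl; rewrite nth_cat ifT ?h2 //; lia.
Qed.

Lemma occ_catr (S : eqType) (d0 : S) uc x y j :
  occ d0 uc (x ++ y) (size x + j) <-> occ d0 uc y j.
Proof.
rewrite -occ_drop ?size_cat ?leq_addr // drop_size_cat //.
Qed.

Lemma flag_catl (S : eqType) (d0 : S) uc x y :
  flagP d0 uc x -> flagP d0 uc (x ++ y).
Proof.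
move=> [i [i0 oc]]; exists i; split=> //; rewrite occ_catl //; by case: oc.
Qed.

Lemma flag_catr (S : eqType) (d0 : S) uc x y :
  flagP d0 uc y -> flagP d0 uc (x ++ y).
Proof.
move=> [j [j0 oc]]; exists (size x + j); split; first by lia.
by rewrite occ_catr.
Qed.

Lemma F1 (S : eqType) (d0 : S) uc x y :
  flagP d0 uc (x ++ y) <-> flagP d0 uc (x ++ take (size uc) y) \/ flagP d0 uc y.
Proof.
have E : x ++ take (size uc) y = take (size x + size uc) (x ++ y).
  by rewrite take_cat ltnNge leq_addr /= addKn.
rewrite E; split.
  move=> [i [i0 oc]].
  case: (leqP (i + size uc) (size x + size uc)) => h.
    by left; exists i; split=> //; rewrite occ_take.
  right; exists (i - size x); split; first by lia.
  by rewrite -(@occ_catr _ d0 uc x); have -> : size x + (i - size x) = i by lia.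
case=> [[i [i0 oc]]|[j [j0 oc]]].
  by exists i; split=> //; move: oc; rewrite occ_take; case.
by exists (size x + j); split; [lia|rewrite occ_catr].
Qed.

Lemma lastn_drop (S : Type) K (x : seq S) : lastn K x = drop (size x - K) x.
Proof. by rewrite /lastn take_rev revK. Qed.

Lemma F2 (S : eqType) (d0 : S) uc x y : size uc <= size x ->
  flagP d0 uc (x ++ y) <-> flagP d0 uc x \/ flagP d0 uc (lastn (size uc) x ++ y).
Proof.
move=> Kx.
have E : lastn (size uc) x ++ y = drop (size x - size uc) (x ++ y).
  rewrite lastn_drop drop_cat; case: ifP => // /negbT; rewrite -leqNgt => h.
  have -> : size x - size uc - size x = 0 by lia.
  have -> : size x - size uc = size x by lia.
  by rewrite drop_size drop0.
rewrite E; split.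
  move=> [i [i0 oc]].
  case: (leqP (i + size uc) (size x)) => h.
    by left; exists i; split=> //; rewrite -(occ_catl d0 y h).
  right; exists (i - (size x - size uc)); split; first by lia.
  rewrite occ_drop ?size_cat; last by lia.
  by have -> : size x - size uc + (i - (size x - size uc)) = i by lia.
case=> [H|[j [j0 oc]]]; first exact: flag_catl.
exists (size x - size uc + j); split; first by lia.
by rewrite -occ_drop // size_cat; lia.
Qed.

Lemma take_long (S : Type) K (x y : seq S) : K <= size x -> take K (x ++ y) = take K x.
Proof.
move=> h; rewrite take_cat; case: ifP => // /negbT; rewrite -leqNgt => h2.
have e : K = size x by lia.
by rewrite e subnn take0 cats0 take_size.
Qed.

Lemma lastn_long (S : Type) K (x y : seq S) : K <= size y -> lastn K (x ++ y) = lastn K y.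
Proof. by move=> h; rewrite /lastn rev_cat take_long // size_rev. Qed.

Lemma T1 (S : Type) K (x y : seq S) : take K (x ++ y) = take K (take K x ++ take K y).
Proof.
case: (leqP K (size x)) => h.
  rewrite take_long // take_long ?take_takel //.
  by rewrite size_take_min; lia.
rewrite !take_cat size_take_min.
have -> : minn K (size x) = size x by lia.
rewrite ltnNge (ltnW h) /= (@take_oversize _ K x); last by lia.
by rewrite take_takel //; lia.
Qed.

Lemma L1 (S : Type) K (x y : seq S) : lastn K (x ++ y) = lastn K (lastn K x ++ lastn K y).
Proof. by rewrite /lastn !rev_cat T1 !revK -T1. Qed.

Definition bo (P : Prop) : bool := if excluded_middle_informative P then true else false.
Lemma boP P : bo P = true <-> P.
Proof. by rewrite /bo; case: excluded_middle_informative. Qed.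
Lemma bo_eq P Q : (P <-> Q) -> bo P = bo Q.
Proof.
move=> H; rewrite /bo.
case: (excluded_middle_informative P) => p; case: (excluded_middle_informative Q) => q //.
  by exfalso; apply: q; apply/H.
by exfalso; apply: p; apply/H.
Qed.

Definition pad (S : finType) K (s : seq S) : K.-tuple (option S) :=
  [tuple nth None (map Some s) i | i < K].

Lemma pad_inj (S : finType) K (s s' : seq S) : size s <= K -> size s' <= K ->
  pad K s = pad K s' -> s = s'.
Proof.
move=> h h' e.
have E : forall i, nth None (map Some s) i = nth None (map Some s') i.
  move=> i; case: (ltnP i K) => iK.
    have := congr1 (fun t => tnth t (Ordinal iK)) e.
    by rewrite /pad !tnth_mktuple.
  by rewrite !nth_default ?size_map //; lia.
have nsome : forall (t : seq S) i, i < size t -> nth None (map Some t) i <> None.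
  by move=> [|a t] i // it; rewrite (nth_map a).
have es : size s = size s'.
  case: (ltngtP (size s) (size s')) => // c.
    move: (E (size s)); rewrite [LHS]nth_default ?size_map // => e0.
    by exfalso; apply: (nsome s' (size s) c); rewrite -e0.
  move: (E (size s')); rewrite [RHS]nth_default ?size_map // => e0.
  by exfalso; apply: (nsome s (size s') c); rewrite e0.
apply: (@inj_map _ _ Some); first by move=> a b [].
apply: (@eq_from_nth _ None); first by rewrite !size_map.
by move=> i _; apply: E.
Qed.

Definition Dty (S : finType) (uc : seq S) :=
  (((size uc).-tuple (option S)) * ((size uc).-tuple (option S)) * bool)%type.

Definition desc (S : finType) (d0 : S) (uc : seq S) (x : seq S) : Dty uc :=
  (pad (size uc) (take (size uc) x), pad (size uc) (lastn (size uc) x),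
   bo (flagP d0 uc x)).

Lemma size_lastn (S : Type) K (x : seq S) : size (lastn K x) = minn K (size x).
Proof. by rewrite /lastn size_rev size_take_min size_rev. Qed.

Lemma desc_eq (S : finType) (d0 : S) uc x x' : desc d0 uc x = desc d0 uc x' ->
  [/\ take (size uc) x = take (size uc) x', lastn (size uc) x = lastn (size uc) x'
    & flagP d0 uc x <-> flagP d0 uc x'].
Proof.
move=> e.
have e1 := congr1 (fun d => d.1.1) e; have e2 := congr1 (fun d => d.1.2) e.
have e3 := congr1 (fun d => d.2) e; simpl in e1, e2, e3; split.
- by apply: (pad_inj _ _ e1); rewrite size_take_min geq_minl.
- by apply: (pad_inj _ _ e2); rewrite size_lastn geq_minl.
- by split=> H; [apply/boP; rewrite -e3; apply/boP | apply/boP; rewrite e3; apply/boP].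
Qed.

Lemma desc_intro (S : finType) (d0 : S) uc x x' :
  take (size uc) x = take (size uc) x' -> lastn (size uc) x = lastn (size uc) x' ->
  (flagP d0 uc x <-> flagP d0 uc x') -> desc d0 uc x = desc d0 uc x'.
Proof. by move=> e1 e2 e3; rewrite /desc e1 e2 (bo_eq e3). Qed.

Lemma CL (S : finType) (d0 : S) uc x x' y y' :
  desc d0 uc x = desc d0 uc x' -> desc d0 uc y = desc d0 uc y' ->
  desc d0 uc (x ++ y) = desc d0 uc (x' ++ y').
Proof.
move=> /desc_eq [t1 l1 f1] /desc_eq [t2 l2 f2].
apply: desc_intro.
- by rewrite T1 t1 t2 -T1.
- by rewrite L1 l1 l2 -L1.
have G : forall z, flagP d0 uc (z ++ y) <-> flagP d0 uc (z ++ y').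
  move=> z; have := F1 d0 uc z y; have := F1 d0 uc z y'; rewrite t2; tauto.
case: (ltnP (size x) (size uc)) => h.
  have ex : x = x'.
    have := congr1 size t1; rewrite !size_take_min => e.
    rewrite -(@take_oversize _ (size uc) x); last by lia.
    by rewrite t1 take_oversize //; lia.
  by rewrite -ex; apply: G.
have h' : size uc <= size x'.
  by have := congr1 size t1; rewrite !size_take_min => e; lia.
have := F2 d0 y h; have := F2 d0 y' h'; have := G (lastn (size uc) x); rewrite l1; tauto.
Qed.

Definition rep (S : finType) (d0 : S) (uc : seq S) (d : Dty uc) : seq S :=
  match excluded_middle_informative (exists x, x != [::] /\ desc d0 uc x = d) with
  | left H => proj1_sig (ClassicalEpsilon.constructive_indefinite_description _ H)
  | right _ => [:: d0]
  end.

Lemma rep_ne (S : finType) (d0 : S) uc d : @rep S d0 uc d != [::].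
Proof.
rewrite /rep; case: excluded_middle_informative => // H.
by case: ClassicalEpsilon.constructive_indefinite_description => x [].
Qed.

Lemma rep_desc (S : finType) (d0 : S) uc x : x != [::] ->
  desc d0 uc (rep d0 (desc d0 uc x)) = desc d0 uc x.
Proof.
move=> xn; rewrite /rep; case: excluded_middle_informative => H.
  by case: ClassicalEpsilon.constructive_indefinite_description => y [].
by exfalso; apply: H; exists x.
Qed.

Definition dmul (S : finType) (d0 : S) (uc : seq S) (a b : Dty uc) : Dty uc :=
  desc d0 uc (rep d0 a ++ rep d0 b).

Lemma dmulL (S : finType) (d0 : S) uc x c : x != [::] ->
  dmul d0 (desc d0 uc x) c = desc d0 uc (x ++ rep d0 c).
Proof. by move=> xn; rewrite /dmul; apply: CL => //; apply: rep_desc. Qed.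

Lemma dmulR (S : finType) (d0 : S) uc a y : y != [::] ->
  dmul d0 a (desc d0 uc y) = desc d0 uc (rep d0 a ++ y).
Proof. by move=> yn; rewrite /dmul; apply: CL => //; apply: rep_desc. Qed.

Lemma dmul_desc (S : finType) (d0 : S) uc x y : x != [::] -> y != [::] ->
  dmul d0 (desc d0 uc x) (desc d0 uc y) = desc d0 uc (x ++ y).
Proof. by move=> xn yn; rewrite /dmul; apply: CL; apply: rep_desc. Qed.

Lemma cat_ne (S : eqType) (x y : seq S) : x != [::] -> x ++ y != [::].
Proof. by case: x. Qed.

Lemma dmulA (S : finType) (d0 : S) uc a b c :
  dmul d0 (dmul d0 a b) c = dmul d0 a (dmul d0 b c) :> Dty uc.
Proof.
rewrite (_ : dmul d0 a b = desc d0 uc (rep d0 a ++ rep d0 b)) //.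
rewrite (_ : dmul d0 b c = desc d0 uc (rep d0 b ++ rep d0 c)) //.
by rewrite dmulL ?cat_ne ?rep_ne // dmulR ?cat_ne ?rep_ne // catA.
Qed.

Definition Tsg (S : finType) (d0 : S) (uc : seq S) : sgd :=
  @Sgd unit (Dty uc) (fun _ => tt) (fun _ => tt) (@dmul S d0 uc)
    (fun _ _ _ => erefl) (fun _ _ _ => erefl) (fun a b c _ _ => dmulA d0 a b c).

Lemma lsl_words (S : finType) (d0 : S) uc E X Y : E != [::] ->
  desc d0 uc (E ++ E) = desc d0 uc E ->
  desc d0 uc ((E ++ X ++ E) ++ (E ++ X ++ E)) = desc d0 uc (E ++ X ++ E) /\
  desc d0 uc ((E ++ X ++ E) ++ (E ++ Y ++ E)) = desc d0 uc ((E ++ Y ++ E) ++ (E ++ X ++ E)).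
Proof.
move=> En /desc_eq [t l f].
have long : size uc <= size E.
  have := congr1 size t; rewrite !size_take_min size_cat.
  by case: E En {t l f} => // a E' _ /=; lia.
set K := size uc in long t l f *.
have tX : forall Z, take K (E ++ Z ++ E) = take K E by move=> Z; rewrite take_long.
have lX : forall Z, lastn K (E ++ Z ++ E) = lastn K E by move=> Z; rewrite catA lastn_long.
have sX : forall Z, K <= size (E ++ Z ++ E) by move=> Z; rewrite size_cat; lia.
have fX : forall Z, flagP d0 uc E -> flagP d0 uc (E ++ Z ++ E) by move=> Z; apply: flag_catl.
have fE1 := F2 d0 E long.
have fE2 := F1 d0 uc (lastn K E) E.
split.
  apply: desc_intro.
  - by rewrite (take_long _ (sX X)).
  - by rewrite (lastn_long _ (sX X)).
  have := F2 d0 (E ++ X ++ E) (sX X); rewrite lX.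
  have := F1 d0 uc (lastn K E) (E ++ X ++ E); rewrite tX.
  have := fX X. tauto.
apply: desc_intro.
- by rewrite (take_long _ (sX X)) (take_long _ (sX Y)) !tX.
- by rewrite (lastn_long _ (sX X)) (lastn_long _ (sX Y)) !lX.
have := F2 d0 (E ++ Y ++ E) (sX X); rewrite lX.
have := F1 d0 uc (lastn K E) (E ++ Y ++ E); rewrite tX.
have := F2 d0 (E ++ X ++ E) (sX Y); rewrite lX.
have := F1 d0 uc (lastn K E) (E ++ X ++ E); rewrite tX.
tauto.
Qed.

Lemma Tsg_LSl (S : finType) (d0 : S) uc : LSl (Tsg d0 uc).
Proof.
split; first by rewrite /is_semigroup /= card_unit.
move=> e s t /= He.
have ee : e = desc d0 uc (rep d0 e ++ rep d0 e) by rewrite -{1}He.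
have Ed : desc d0 uc (rep d0 e) = e by rewrite ee rep_desc ?cat_ne ?rep_ne // -ee.
set E := rep d0 e in ee Ed *.
have En : E != [::] by apply: rep_ne.
have HE : desc d0 uc (E ++ E) = desc d0 uc E by rewrite -ee Ed.
have aE : forall z, dmul d0 (dmul d0 e z) e = desc d0 uc (E ++ rep d0 z ++ E).
  move=> z.
  have -> : dmul d0 e z = desc d0 uc (E ++ rep d0 z) by [].
  have -> : dmul d0 (desc d0 uc (E ++ rep d0 z)) e =
            dmul d0 (desc d0 uc (E ++ rep d0 z)) (desc d0 uc E) by rewrite Ed.
  by rewrite dmul_desc ?cat_ne // catA.
have [H1 H2] := lsl_words (rep d0 s) (rep d0 t) En HE.
rewrite !aE !dmul_desc ?cat_ne //; split=> //.
Qed.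

Definition test (A : graph) := {S : sgd & ghom A S}.
Definition idem (A : graph) (w : nat -> gE A) (t : test A) (n : nat) : Prop :=
  smul (eval_prefix (projT2 t) w n) (eval_prefix (projT2 t) w n) = eval_prefix (projT2 t) w n.

Definition prod_ghom A S T (p : ghom A S) (q : ghom A T) : ghom A (prod_sgd S T).
refine (@GHom A (prod_sgd S T) (fun v => (gv p v, gv q v)) (fun e => (ge p e, ge q e)) _ _).
- by move=> a /=; rewrite !ge_src.
- by move=> a /=; rewrite !ge_rng.
Defined.

Lemma eval_prod A S T (p : ghom A S) (q : ghom A T) w n :
  eval_prefix (prod_ghom p q) w n = (eval_prefix p w n, eval_prefix q w n).
Proof. by elim: n => //= n; rewrite /eval_prefix /= => ->. Qed.

Definition unit_ghom A : ghom A unit_sgd :=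
  @GHom A unit_sgd (fun _ => tt) (fun _ => tt) (fun _ => erefl) (fun _ => erefl).

Lemma eval_hom A S T (psi : shom S T) (phi : ghom A S) (phi' : ghom A T) w :
  rinf_path w ->
  (forall v, gv phi' v = hv psi (gv phi v)) ->
  (forall a, ge phi' a = he psi (ge phi a)) ->
  forall n, eval_prefix phi' w n = he psi (eval_prefix phi w n).
Proof.
move=> Hw Hv Ha; elim=> [|n IH]; first by rewrite /eval_prefix /= Ha.
rewrite /eval_prefix /= -/(eval_prefix phi' w n) IH Ha hmul //.
have [s1 _] := prodp_sr n (eval_chain phi Hw).
by rewrite s1 eval_chain.
Qed.

Lemma ulim (T : Type) (G : set_system T) (C : finType) (f : T -> C) :
  UltraFilter G -> exists v, G (fun t => f t = v).
Proof.
move=> GU.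
suff : forall s : seq C, (exists v, G (fun t => f t = v)) \/ G (fun t => f t \notin s).
  case/(_ (enum C)) => // H; exfalso.
  by have [t] := filter_ex H; rewrite mem_enum.
elim=> [|c s IH]; first by right; apply: filterS filterT => t _.
case: IH => [|H]; first by left.
case: (in_ultra_setVsetC (fun t => f t = c) GU) => Hc; first by left; exists c.
right; apply: filterS (filterI H Hc) => t [H1 H2].
rewrite in_cons negb_or H1 andbT; apply/eqP; exact: H2.
Qed.

Lemma uuniq (T : Type) (G : set_system T) (C : Type) (f : T -> C) v v' :
  UltraFilter G -> G (fun t => f t = v) -> G (fun t => f t = v') -> v = v'.
Proof.
move=> GU H1 H2; have [t [e1 e2]] := filter_ex (filterI H1 H2).
by rewrite -e1 -e2.
Qed.

Lemma ufin (T : Type) (G : set_system T) k (P : 'I_k -> set T) :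
  UltraFilter G -> (forall i, G (P i)) -> G (fun t => forall i, P i t).
Proof.
move=> GU HP.
suff : forall s : seq 'I_k, G (fun t => forall i, i \in s -> P i t).
  by move/(_ (enum 'I_k)); apply: filterS => t H i; apply: H; rewrite mem_enum.
elim=> [|i s IH]; first by apply: filterS filterT => t _ i.
apply: filterS (filterI (HP i) IH) => t [H1 H2] j; rewrite in_cons.
by case/orP => [/eqP -> //|]; apply: H2.
Qed.

Lemma rec_P (A : graph) (w : nat -> gE A) (V : sgd -> Prop) :
  rinf_path w -> recurrent w -> P_has_idempotent V w.
Proof.
move=> Hw Hr.
pose Bs (t : test A) (N : nat) : set nat :=
  fun n => N <= n /\ gsrc (w n) = grng (w 0) /\ idem w t n.
pose F : set_system nat := fun X => exists t N, forall n, Bs t N n -> X n.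
have FF : ProperFilter F.
  apply: Build_ProperFilter_ex.
    move=> X [t [N HX]].
    have [n Hn] := lemK (projT2 t) N Hw Hr.
    by exists n; apply: HX.
  split.
  - by exists (existT _ _ (unit_ghom A)), 0.
  - move=> X Y [t1 [N1 H1]] [t2 [N2 H2]].
    exists (existT _ _ (prod_ghom (projT2 t1) (projT2 t2))), (maxn N1 N2).
    move=> n [Nn [Hv]]; rewrite geq_max in Nn; case/andP: Nn => l1 l2.
    rewrite /idem /= eval_prod /=; case=> e1 e2; split.
    + by apply: H1; split=> //; split=> //; rewrite /idem e1.
    + by apply: H2; split=> //; split=> //; rewrite /idem e2.
  - by move=> X Y XY [t [N H]]; exists t, N => n /H /XY.
have [G [GU FG]] := ultraFilterLemma FF.
have GB : forall t N, G (Bs t N) by move=> t N; apply: FG; exists t, N.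
pose pi0 (S : sgd) (phi : ghom A S) :=
  proj1_sig (cid (ulim (fun n => eval_prefix phi w n) GU)).
have Hpi : forall S phi, G (fun n => eval_prefix phi w n = pi0 S phi).
  by move=> S phi; rewrite /pi0; case: cid.
exists (grng (w 0)), (fun S _ phi => pi0 S phi); split; [split|split].
- move=> S _ phi.
  have [n [es [_ [Hv _]]]] := filter_ex (filterI (Hpi S phi) (GB (existT _ _ (unit_ghom A)) 0)).
  have [s1 r1] := prodp_sr n (eval_chain phi Hw).
  rewrite -es /eval_prefix s1 r1 ge_src ge_rng Hv; split=> //.
- move=> S T _ _ psi phi phi' Hv Ha.
  apply: (uuniq GU (Hpi T phi')).
  apply: filterS (Hpi S phi) => n es.
  by rewrite (eval_hom Hw Hv Ha) es.
- move=> S _ phi.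
  have [n [es [_ [_ Hi]]]] := filter_ex (filterI (Hpi S phi) (GB (existT _ _ phi) 0)).
  by move: Hi; rewrite /idem /= es.
- move=> k Ss hs phis N.
  have Hall := ufin GU (fun i => Hpi (Ss i) (phis i)).
  have [n [es [Nn [Hv _]]]] := filter_ex (filterI Hall (GB (existT _ _ (unit_ghom A)) N)).
  exists n; do 3 (split=> //).
Qed.

Definition cls (A : graph) (w : nat -> gE A) Lp (e : gE A) : 'I_Lp.+1 :=
  match excluded_middle_informative (exists j, j < Lp /\ w j = e) with
  | left H => inord (proj1_sig (ClassicalEpsilon.constructive_indefinite_description _ H))
  | right _ => ord_max
  end.

Lemma cls_spec1 (A : graph) (w : nat -> gE A) Lp j : j < Lp -> cls w Lp (w j) < Lp.
Proof.
move=> jL; rewrite /cls; case: excluded_middle_informative => H.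
  case: ClassicalEpsilon.constructive_indefinite_description => k [kL _] /=.
  by rewrite inordK //; lia.
by exfalso; apply: H; exists j.
Qed.

Lemma cls_spec2 (A : graph) (w : nat -> gE A) Lp e : cls w Lp e < Lp -> w (cls w Lp e) = e.
Proof.
rewrite /cls; case: excluded_middle_informative => H.
  case: ClassicalEpsilon.constructive_indefinite_description => k [kL wk] /=.
  by rewrite inordK //; lia.
by rewrite /= ltnn.
Qed.

Definition ucw (A : graph) (w : nat -> gE A) Lp : seq 'I_Lp.+1 :=
  map (fun j => cls w Lp (w j)) (iota 0 Lp).

Definition TT (A : graph) (w : nat -> gE A) Lp : sgd := Tsg ord0 (ucw w Lp).

Definition phiT (A : graph) (w : nat -> gE A) Lp : ghom A (TT w Lp) :=
  @GHom A (TT w Lp) (fun _ => tt) (fun e => desc ord0 (ucw w Lp) [:: cls w Lp e])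
     (fun _ => erefl) (fun _ => erefl).

Lemma evalT (A : graph) (w : nat -> gE A) Lp m :
  eval_prefix (phiT w Lp) w m =
  desc ord0 (ucw w Lp) (map (fun i => cls w Lp (w i)) (iota 0 m.+1)).
Proof.
elim: m => [|m IH] //.
change (eval_prefix (phiT w Lp) w m.+1) with
  (smul (eval_prefix (phiT w Lp) w m) (ge (phiT w Lp) (w m.+1))).
rewrite IH.
have -> : iota 0 m.+2 = iota 0 m.+1 ++ [:: m.+1].
  by rewrite -addn1 iotaD.
by rewrite map_cat; apply: dmul_desc.
Qed.

Lemma detect (A : graph) (w : nat -> gE A) Lp m : Lp <= m.+1 ->
  let W := map (fun i => cls w Lp (w i)) (iota 0 m.+1) in
  dmul ord0 (desc ord0 (ucw w Lp) W) (desc ord0 (ucw w Lp) W) = desc ord0 (ucw w Lp) W ->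
  exists i, 0 < i /\ forall j, j < Lp -> w (i + j) = w j.
Proof.
move=> Lm W; rewrite dmul_desc // => /desc_eq [_ _ f].
have su : size (ucw w Lp) = Lp by rewrite size_map size_iota.
have sW : size W = m.+1 by rewrite size_map size_iota.
have nW : forall k, k < m.+1 -> nth ord0 W k = cls w Lp (w k).
  by move=> k km; rewrite (nth_map 0) ?size_iota // nth_iota.
have nu : forall k, k < Lp -> nth ord0 (ucw w Lp) k = cls w Lp (w k).
  by move=> k km; rewrite (nth_map 0) ?size_iota // nth_iota.
have : flagP ord0 (ucw w Lp) (W ++ W).
  exists (size W + 0); split; first by lia.
  rewrite occ_catr; split; first by rewrite su sW add0n.
  move=> j; rewrite su add0n => jL; rewrite nu // nW //.
  by apply: leq_trans jL Lm.
move/f => [i [i0 [h1 h2]]].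
exists i; split=> // j jL.
have h3 : i + j < m.+1.
  by move: h1; rewrite su sW => h1; apply: leq_trans h1; rewrite ltn_add2l.
have := h2 j; rewrite su nu // nW //.
move=> /(_ jL) e.
have c1 := cls_spec1 w jL.
rewrite -(cls_spec2 c1) -e cls_spec2 // e //.
Qed.

Lemma period (A : graph) (w : nat -> gE A) n :
  (exists i, 0 < i /\ forall j, j < (2 * n).+1 -> w (i + j) = w j) ->
  exists m, n < m /\ forall j, j < n -> w j = w (m + j).
Proof.
move=> [i [i0 Hi]].
have claim : forall s j, j + s * i < (2 * n).+1 + i -> w (s * i + j) = w j.
  elim=> [|s IH] j hj; first by rewrite mul0n.
  rewrite mulSn -addnA Hi; last by lia.
  by apply: IH; lia.
exists (n %/ i * i + i).
have dq := divn_eq n i; have r := ltn_pmod n i0.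
split; first by lia.
move=> j jn.
have -> : n %/ i * i + i + j = (n %/ i).+1 * i + j by rewrite mulSn; lia.
rewrite claim //; rewrite mulSn; lia.
Qed.

Lemma P_rec (A : graph) (w : nat -> gE A) (V : sgd -> Prop) :
  (forall Lp, V (TT w Lp)) -> rinf_path w -> P_has_idempotent V w -> recurrent w.
Proof.
move=> hT Hw [x [pi [Hfree [Hidem Hcl]]]] n.
pose Lp := (2 * n).+1.
have [m [Nm [_ [_ He]]]] := Hcl 1 (fun _ => TT w Lp) (fun _ => hT Lp) (fun _ => phiT w Lp) Lp.
have := Hidem _ (hT Lp) (phiT w Lp).
rewrite (He ord0) evalT => /(@detect _ w Lp m (leqW Nm)) H.
apply: period; exact: H.
Qed.

Theorem mainTheorem16 (A : graph) (w : nat -> gE A) :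
  rinf_path w ->
  [/\ recurrent w <-> P_has_idempotent Sd w,
      recurrent w <-> (forall V : sgd -> Prop, pseudovariety V -> contains_N V ->
                         P_has_idempotent V w)
    & recurrent w <-> P_has_idempotent gLSl w].
Proof.
move=> Hw.
have PSd : P_has_idempotent Sd w -> recurrent w by apply: P_rec.
split; split.
- exact: rec_P.
- exact: PSd.
- by move=> Hr V _ _; apply: rec_P.
- by move=> H; apply: PSd; apply: H => //; split.
- exact: rec_P.
- apply: P_rec => // Lp V _ HV; apply: HV; exact: Tsg_LSl.
Qed.
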